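(* Let $n\ge 2$, let $P\subset B_\infty^d(1)$ with $|P|=n$, and let $\sigma:P\to\{-1,+1\}$. Let $\rho$ be an integer with $\rho+1\ge 2e^2d(\sqrt{3\log n}+3)+\log n+2d$, and define the polynomial \[\mathcal{P}_{P,\rho}(x)=\sum_{k=0}^{\rho}\frac{2^k}{k!}\sum_{p\in P}\sigma(p)e^{-\|p\|^2}\langle p,x\rangle^k .\] Then for every $x\in B_\infty^d(\sqrt{3\log n}+3)$, \[\left|\sum_{p\in P}\sigma(p)e^{2\|p\|^2}e^{-\frac13\|x-3p\|^2}-e^{-\frac13\|x\|^2}\mathcal{P}_{P,\rho}(x)\right|\le 1.\]
   Context: $\log$ is the natural logarithm. $B_\infty^d(r)=\{x\in\mathbb{R}^d:|x_j|<r\text{ for all }j\}$. $\|\cdot\|$ is the Euclidean norm and $\langle\cdot,\cdot\rangle$ the standard inner product. *)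

(* Defs.v *)
From HB Require Import structures.
From mathcomp Require Import all_boot all_order all_algebra.
From mathcomp Require Import all_classical all_reals all_analysis.
Set Implicit Arguments. Unset Strict Implicit. Unset Printing Implicit Defensive.
Import Order.TTheory GRing.Theory Num.Theory.
Local Open Scope ring_scope.

Definition dotp {R : realType} {d : nat} (u v : 'rV[R]_d) : R :=
  \sum_(i < d) u 0 i * v 0 i.

Definition sqnorm {R : realType} {d : nat} (v : 'rV[R]_d) : R := dotp v v.

Definition in_Binf {R : realType} {d : nat} (r : R) (x : 'rV[R]_d) : Prop :=
  forall j : 'I_d, `|x 0 j| < r.

Definition calP {R : realType} {d : nat} (P : seq 'rV[R]_d)
  (sigma : 'rV[R]_d -> R) (rho : nat) (x : 'rV[R]_d) : R :=
  \sum_(0 <= k < rho.+1)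
    (2 ^+ k / (k`!)%:R) *
    \sum_(p <- P) sigma p * expR (- sqnorm p) * (dotp p x) ^+ k.

(* Main.v *)
Require Import Defs.
From HB Require Import structures.
From mathcomp Require Import all_boot all_order all_algebra.
From mathcomp Require Import all_classical all_reals all_analysis.
From mathcomp Require Import ring lra.
Import Order.TTheory GRing.Theory Num.Theory.
Local Open Scope ring_scope.

Section S.
Variable R : realType.

Lemma geom0 (q : R) m : 0 <= q -> 2*q <= 1 -> \sum_(0<=k<m) q^+k.+1 <= 1 - q^+m.
Proof.
move=> q0 q1; elim: m => [|m IH]; first by rewrite big_nil expr0 subrr.
rewrite big_nat_recl // expr1.
have -> : \sum_(0 <= i < m) q ^+ i.+2 = q * \sum_(0 <= i < m) q ^+ i.+1.
  by rewrite mulr_sumr; apply: eq_bigr => i _; rewrite exprS.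
have hq : 0 <= q ^+ m by rewrite exprn_ge0.
rewrite exprS.
have := ler_wpM2l q0 IH. nra.
Qed.

Lemma geom1 (q : R) N : 0 <= q -> 2*q <= 1 -> \sum_(1<=k<N) q^+k <= 1.
Proof.
move=> q0 q1; rewrite big_add1.
apply: (le_trans (geom0 _ _ q0 q1)).
rewrite lerBlDr lerDl exprn_ge0 //.
Qed.

Lemma e_ge2 : 2 <= expR (1:R).
Proof. have := expR_ge1Dx (1:R). lra. Qed.

Lemma term_bound (t c : R) (K k : nat) : (0 < K)%N -> (K <= k)%N ->
  expR 1 ^+ 2 * `|t| + c <= K%:R ->
  `|t ^+ k / k`!%:R| <= expR (- c) * (expR 1)^-1 ^+ k.
Proof.
move=> K0 Kk H.
set e := expR (1:R). change (expR 1) with e in H.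
have e0 : 0 < e by apply: expR_gt0.
have ek : expR (k%:R) = e ^+ k by rewrite -[k%:R]mulr1 expRM_natl.
case: k Kk ek => [|k] Kk ek; first by rewrite leqn0 in Kk; move/eqP: Kk K0 => ->.
have h1 := expR_ge1Dxn k (mulr_ge0 (ltW (exprn_gt0 2 e0)) (normr_ge0 t)).
have h2 : (e ^+ 2 * `|t|) ^+ k.+1 / k.+1`!%:R <= expR (k.+1%:R - c).
  apply: le_trans (_ : expR (e ^+ 2 * `|t|) <= _).
    have : 0 <= 1 :> R by []. fold e in h1. lra.
  rewrite ler_expR.
  have : (K%:R <= k.+1%:R :> R) by rewrite ler_nat.
  lra.
rewrite expRB ek in h2.
rewrite normrM normrX normfV (ger0_norm (ler0n _ _)).
rewrite exprMn -exprM in h2.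
have hE : 0 < e ^+ k.+1 by apply: exprn_gt0.
have hC : 0 < expR c by apply: expR_gt0.
set A := `|t| ^+ k.+1 / _ in h2 *.
rewrite -mulrA in h2.
have -> : A = (e ^+ (2 * k.+1) * A) / (e ^+ (2 * k.+1)).
  by rewrite mulrC mulrA mulVf ?mul1r // gt_eqF // exprn_gt0.
have -> : expR (- c) * e^-1 ^+ k.+1 = (e ^+ k.+1 / expR c) / (e ^+ (2 * k.+1)).
  rewrite expRN exprVn mulnC exprM expr2.
  field. by rewrite !gt_eqF.
by rewrite ler_pM2r // invr_gt0 exprn_gt0.
Qed.


Lemma tail (t c : R) (K : nat) : (0 < K)%N -> expR 1 ^+ 2 * `|t| + c <= K%:R ->
  `|expR t - \sum_(0 <= k < K) t ^+ k / k`!%:R| <= expR (- c).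
Proof.
move=> K0 H.
set T := \sum_(0<=k<K) _.
have HN : forall N, (K <= N)%N -> `|series (exp_coeff t) N - T| <= expR (-c).
  move=> N KN; rewrite /series /= (@big_cat_nat _ _ _ K 0 N _ _ (leq0n K) KN) /= addrC addrK.
  apply: le_trans (ler_norm_sum _ _ _) _.
  apply: (@le_trans _ _ (\sum_(K<=k<N) expR(-c) * (expR 1)^-1^+k)).
    rewrite big_nat [X in _ <= X]big_nat; apply: ler_sum => k /andP[Kk _].
    rewrite /exp_coeff /=. have hh := (@term_bound t c K k K0 Kk H). exact hh.
  rewrite -big_distrr /= -[X in _ <= X]mulr1; apply: ler_wpM2l; first exact: expR_ge0.
  have q0 : 0 <= (expR (1:R))^-1 by rewrite invr_ge0 expR_ge0.
  have q1 : 2 * (expR (1:R))^-1 <= 1.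
    have := e_ge2; have := expR_gt0 (1:R) => h1 h2.
    by rewrite -ler_pdivlMr ?invr_gt0 // mul1r invrK.
  apply: le_trans (@geom1 _ N q0 q1).
  rewrite (@big_cat_nat _ _ _ K 1 N _ _ K0 KN) /= lerDr; apply: sumr_ge0 => i _; exact: exprn_ge0.
have cv := is_cvg_series_exp_coeff t.
rewrite ler_norml; apply/andP; split.
- have : T - expR(-c) <= expR t.
    apply: limr_ge cv _; exists K => // N /= KN.
    by have := HN N KN; rewrite ler_norml => /andP[h1 h2]; lra.
  lra.
- have : expR t <= T + expR(-c).
    apply: limr_le cv _; exists K => // N /= KN.
    by have := HN N KN; rewrite ler_norml => /andP[h1 h2]; lra.
  lra.
Qed.

Lemma sq_expand (d : nat) (x p : 'rV[R]_d) :
  sqnorm (x - 3 *: p) = sqnorm x - 6 * dotp p x + 9 * sqnorm p.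
Proof.
rewrite /sqnorm /dotp mulr_sumr mulr_sumr -sumrN -!big_split /=.
by apply: eq_bigr => i _; rewrite !mxE; ring.
Qed.

Lemma sqnorm_ge0 (d : nat) (x : 'rV[R]_d) : 0 <= sqnorm x.
Proof. by rewrite /sqnorm /dotp; apply: sumr_ge0 => i _; rewrite -expr2 sqr_ge0. Qed.

Lemma dot_bound (d : nat) (p x : 'rV[R]_d) r :
  in_Binf 1 p -> in_Binf r x -> `|dotp p x| <= d%:R * r.
Proof.
move=> hp hx; rewrite /dotp.
apply: le_trans (ler_norm_sum _ _ _) _.
apply: (@le_trans _ _ (\sum_(i < d) r)).
  apply: ler_sum => i _; rewrite normrM.
  have := hp i; have := hx i; have := normr_ge0 (p 0 i); have := normr_ge0 (x 0 i).
  nra.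
by rewrite sumr_const card_ord mulr_natl.
Qed.
End S.

Theorem mainTheorem4 (R : realType) (d n : nat) (P : seq 'rV[R]_d)
  (sigma : 'rV[R]_d -> R) (rho : nat) :
  (2 <= n)%N ->
  uniq P -> size P = n ->
  (forall p, p \in P -> in_Binf 1 p) ->
  (forall p, p \in P -> sigma p = 1 \/ sigma p = -1) ->
  2 * expR (1 : R) ^+ 2 * d%:R * (Num.sqrt (3 * ln (n%:R : R)) + 3) + ln (n%:R : R) + 2 * d%:R
    <= rho%:R + 1 ->
  forall x : 'rV[R]_d, in_Binf (Num.sqrt (3 * ln (n%:R : R)) + 3) x ->
  `| \sum_(p <- P) sigma p * expR (2 * sqnorm p)
        * expR (- (1/3) * sqnorm (x - 3 *: p))
     - expR (- (1/3) * sqnorm x) * calP P sigma rho x | <= 1.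
Proof.
move=> n2 uP sP hP hs H x hx.
have key : forall p, p \in P -> sigma p * expR (2 * sqnorm p)
        * expR (- (1/3) * sqnorm (x - 3 *: p)) =
    expR (- (1/3) * sqnorm x) * (sigma p * expR (- sqnorm p) * expR (2 * dotp p x)).
  move=> p _.
  have hh : expR (2 * sqnorm p) * expR (- (1/3) * sqnorm (x - 3 *: p)) =
     expR (- (1/3) * sqnorm x) * (expR (- sqnorm p) * expR (2 * dotp p x)).
    by rewrite -!expRD; congr expR; rewrite sq_expand; field.
  rewrite -mulrA hh; ring.
have hcal : calP P sigma rho x = \sum_(p <- P) sigma p * expR (- sqnorm p) *
    \sum_(0 <= k < rho.+1) (2 * dotp p x) ^+ k / k`!%:R.
  rewrite /calP; under eq_bigr do rewrite mulr_sumr.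
  rewrite exchange_big /=; apply: eq_bigr => p _.
  rewrite mulr_sumr; apply: eq_bigr => k _; rewrite exprMn; ring.
rewrite hcal big_seq.
under eq_bigr => p hp do rewrite (key p hp).
rewrite -big_seq -mulr_sumr -mulrBr -sumrB normrM.
have E1 : `|expR (- (1/3) * sqnorm x)| <= 1.
  rewrite ger0_norm ?expR_ge0 // expR_le1.
  have := @sqnorm_ge0 _ _ x; lra.
apply: le_trans (ler_pM (normr_ge0 _) (normr_ge0 _) E1 (lexx _)) _.
rewrite mul1r.
apply: le_trans (ler_norm_sum _ _ _) _.
have n0 : 0 < n%:R :> R by rewrite ltr0n; apply: leq_trans n2.
apply: (@le_trans _ _ (\sum_(p <- P) (n%:R)^-1)); last first.
  by rewrite big_const_seq count_predT iter_addr_0 sP -(mulr_natr (n%:R)^-1) mulVf // gt_eqF.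
rewrite big_seq [X in _ <= X]big_seq; apply: ler_sum => p hp.
rewrite -mulrBr normrM.
set r := Num.sqrt (3 * ln (n%:R : R)) + 3.
have r0 : 0 <= r by rewrite /r addr_ge0 // sqrtr_ge0.
have hdot := @dot_bound _ _ _ _ _ (hP p hp) hx.
have ln0 : 0 <= ln (n%:R : R) by rewrite ln_ge0 // ler1n; apply: leq_trans n2.
have ht : expR 1 ^+ 2 * `|2 * dotp p x| + (ln (n%:R:R) + 2 * d%:R) <= rho.+1%:R.
  rewrite -addn1 natrD normrM (ger0_norm (ler0n _ 2)).
  have e0 : 0 <= expR (1:R) ^+ 2 by rewrite exprn_ge0 // expR_ge0.
  have := ler_wpM2l e0 hdot. move: H. rewrite -/r. nra.
have T := @tail _ _ _ _ (ltn0Sn rho) ht.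
have T2 : expR (- (ln (n%:R:R) + 2 * d%:R)) <= (n%:R)^-1.
  apply: le_trans (_ : expR (- ln (n%:R:R)) <= _).
    rewrite ler_expR lerN2 lerDl mulr_ge0 //.
  by rewrite expRN lnK // posrE.
have S1 : `|sigma p * expR (- sqnorm p)| <= 1.
  rewrite normrM (ger0_norm (expR_ge0 _)).
  have : `|sigma p| = 1 by case: (hs p hp) => ->; rewrite ?normrN normr1.
  move=> ->; rewrite mul1r expR_le1; have := @sqnorm_ge0 _ _ p; lra.
rewrite -[X in _ <= X]mul1r.
exact: ler_pM (normr_ge0 _) (normr_ge0 _) S1 (le_trans T T2).
Qed.
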